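(* Let $n \ge 3$ and let $x_1, \dots, x_n \in \mathbb{R}$ be pairwise distinct. Let $\mathbb{H} = \{\theta \in \mathbb{C} : \Im\theta > 0\}$, $h(\theta) = \prod_{j=1}^n (x_j - \theta)$, $q(\theta) = \theta - n\,\frac{h(\theta)}{h'(\theta)}$, and $Q(\theta) = q(q(\theta))$ for $\theta \in \mathbb{H}$ (this is a holomorphic map $\mathbb{H} \to \mathbb{H}$). Let $\hat\theta \in \mathbb{H}$ be the maximum likelihood estimate of the sample, i.e. the maximizer over $\mathbb{H}$ of $L(\theta) = \prod_{j=1}^n \frac{\Im\theta}{\pi\left((x_j - \Re\theta)^2 + (\Im\theta)^2\right)}$. Then: (i) the equation $z = Q(z)$ has a unique solution in $\mathbb{H}$, and it equals $\hat\theta$; (ii) this unique solution $\hat\theta$ of $z = Q(z)$ in $\mathbb{H}$ is a fixed point of $Q$; (iii) for every $z \in \mathbb{H}$, $\lim_{m\to\infty} Q^m(z) = \hat\theta$, where $Q^m$ denotes the $m$-fold iterate of $Q$, and this convergence is exponentially fast, i.e. there exist $C > 0$ and $r \in (0,1)$ (depending on $z$ and the sample) with $|Q^m(z) - \hat\theta| \le C r^m$ for all $m$.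
   Context: The Cauchy distribution $C(\theta)$ with $\theta = \mu + i\sigma \in \mathbb{H}$ ($\mu \in \mathbb{R}$, $\sigma>0$) has density $f(x;\theta) = \frac{\sigma}{\pi}\frac{1}{(x-\mu)^2+\sigma^2}$ on $\mathbb{R}$. The likelihood of the sample is $L(\theta) = \prod_{j=1}^n f(x_j;\theta)$; for $n \ge 3$ distinct observations its maximizer over $\mathbb{H}$ exists and is unique, and it is called the maximum likelihood estimate $\hat\theta$. Since the $x_j$ are distinct, all zeros of $h'$ are real, so $q$ is defined on $\mathbb{H}$; $q$ maps $\mathbb{H}$ into the lower half-plane and the lower half-plane into $\mathbb{H}$. *)

(* Defs.v *)
From HB Require Import structures.
From mathcomp Require Import all_boot all_order all_algebra.
From mathcomp Require Import complex.
From mathcomp Require Import all_classical all_reals all_analysis.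
Set Implicit Arguments. Unset Strict Implicit. Unset Printing Implicit Defensive.
Import Order.TTheory GRing.Theory Num.Theory ComplexField.
Local Open Scope ring_scope.
Local Open Scope complex_scope.

Section Cauchy.
Variable R : realType.
Variable n : nat.
Variable x : 'I_n -> R.

Definition inH (t : R[i]) : Prop := 0 < complex.Im t.

Definition hpoly : {poly R[i]} := \prod_(j < n) ((x j)%:C%:P - 'X).

Definition qmap (t : R[i]) : R[i] :=
  t - n%:R * hpoly.[t] / (hpoly^`()).[t].

Definition Qmap (t : R[i]) : R[i] := qmap (qmap t).

Definition lik (t : R[i]) : R :=
  \prod_(j < n) (complex.Im t / (pi * ((x j - complex.Re t) ^+ 2 + (complex.Im t) ^+ 2))).

Definition is_mle (th : R[i]) : Prop :=
  inH th /\ forall t, inH t -> lik t <= lik th.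

End Cauchy.

(* Main.v *)
Require Import Defs.
From HB Require Import structures.
From mathcomp Require Import all_boot all_order all_algebra.
From mathcomp Require Import complex.
From mathcomp Require Import all_classical all_reals all_analysis.
From mathcomp Require Import ring lra.
Import Order.TTheory GRing.Theory Num.Theory ComplexField numFieldNormedType.Exports.
Local Open Scope ring_scope.
Local Open Scope complex_scope.
Local Open Scope classical_set_scope.

Lemma deriv_prod_seq (F : fieldType) (I : Type) (s : seq I) (P : I -> {poly F}) (c : F) :
  (forall i, (P i).[c] != 0) ->
  (\prod_(i <- s) P i)^`().[c] = (\prod_(i <- s) P i).[c] * \sum_(i <- s) (P i)^`().[c] / (P i).[c].
Proof.
move=> nz; elim: s => [|i s IH].
  by rewrite !big_nil -polyC1 derivC !horner0 mulr0.
rewrite !big_cons derivM hornerD !hornerM IH.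
by field; apply: nz.
Qed.

Lemma deriv_prod_ord (F : fieldType) m (P : 'I_m -> {poly F}) (c : F) :
  (forall i, (P i).[c] != 0) ->
  (\prod_(i < m) P i)^`().[c] = (\prod_(i < m) P i).[c] * \sum_(i < m) (P i)^`().[c] / (P i).[c].
Proof. exact: deriv_prod_seq. Qed.
Section S.
Variable R : realType.
Implicit Types z w : R[i].
Definition sq z : R := complex.Re z ^+ 2 + complex.Im z ^+ 2.
Lemma ReD z w : complex.Re (z + w) = complex.Re z + complex.Re w.
Proof. by case: z; case: w. Qed.
Lemma ImD z w : complex.Im (z + w) = complex.Im z + complex.Im w.
Proof. by case: z; case: w. Qed.
Lemma ReN z : complex.Re (- z) = - complex.Re z. Proof. by case: z. Qed.
Lemma ImN z : complex.Im (- z) = - complex.Im z. Proof. by case: z. Qed.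
Lemma ImV z : complex.Im (z^-1) = - complex.Im z / sq z.
Proof. case: z => a b /=. rewrite /sq /=. by rewrite mulNr. Qed.
Lemma ReV z : complex.Re (z^-1) = complex.Re z / sq z.
Proof. case: z => a b /=. by rewrite /sq /=. Qed.
Lemma ImSum m (f : 'I_m -> R[i]) : complex.Im (\sum_(k < m) f k) = \sum_(k < m) complex.Im (f k).
Proof. by elim/big_rec2: _ => // k a b _ <-; rewrite ImD. Qed.
Lemma ReSum m (f : 'I_m -> R[i]) : complex.Re (\sum_(k < m) f k) = \sum_(k < m) complex.Re (f k).
Proof. by elim/big_rec2: _ => // k a b _ <-; rewrite ReD. Qed.
Lemma ImRC (r : R) : complex.Im (r%:C) = 0. Proof. by []. Qed.
Lemma ReRC (r : R) : complex.Re (r%:C) = r. Proof. by []. Qed.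
Lemma sq_ge0 z : 0 <= sq z. Proof. rewrite /sq; nra. Qed.
Lemma sq_gtIm z : complex.Im z != 0 -> 0 < sq z.
Proof. move=> h; rewrite /sq. have : 0 < complex.Im z ^+ 2 by rewrite exprn_even_gt0. nra. Qed.
Lemma sum_gt0 m (f : 'I_m -> R) : (0 < m)%N -> (forall k, 0 < f k) -> 0 < \sum_(k < m) f k.
Proof.
move=> m0 fp; rewrite (bigD1 (Ordinal m0)) //=.
by rewrite ltr_pwDl // sumr_ge0 // => k _; apply/ltW.
Qed.

Variable n : nat.
Variable x : 'I_n -> R.
Definition u z k := (z - (x k)%:C)^-1.
Definition Ez z := (\sum_k u z k) / n%:R.

Lemma Im_sub_x z k : complex.Im (z - (x k)%:C) = complex.Im z.
Proof. by rewrite ImD ImN ImRC oppr0 addr0. Qed.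

Lemma Im_u z k : complex.Im (u z k) = - complex.Im z / sq (z - (x k)%:C).
Proof. by rewrite /u ImV Im_sub_x. Qed.

Lemma Im_sumu z : complex.Im (\sum_k u z k) = - complex.Im z * \sum_k (sq (z - (x k)%:C))^-1.
Proof. by rewrite ImSum mulr_sumr; apply: eq_bigr => k _; rewrite Im_u. Qed.

Lemma sumu_neq0 z : (0 < n)%N -> complex.Im z != 0 -> \sum_k u z k != 0.
Proof.
move=> n0 hz; apply/eqP => /(congr1 (@complex.Im R)); rewrite Im_sumu /=.
apply/eqP; rewrite mulf_neq0 // ?oppr_eq0 //.
rewrite gt_eqF // sum_gt0 // => k; rewrite invr_gt0 sq_gtIm // Im_sub_x //.
Qed.

Lemma hpoly_eval z : (hpoly x).[z] = \prod_k ((x k)%:C - z).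
Proof. by rewrite /hpoly horner_prod; apply: eq_bigr => k _; rewrite hornerD hornerN hornerC hornerX. Qed.

Lemma xk_sub_neq0 z k : complex.Im z != 0 -> (x k)%:C - z != 0.
Proof. move=> hz; apply/eqP => /(congr1 (@complex.Im R)); rewrite ImD ImN ImRC /=.
by move=> h; move: hz; rewrite -oppr_eq0 -h add0r eqxx. Qed.

Lemma qmap_E z : (0 < n)%N -> complex.Im z != 0 -> qmap x z = z - (Ez z)^-1.
Proof.
move=> n0 hz; rewrite /qmap /Ez.
have h0 : (hpoly x).[z] != 0.
  by rewrite hpoly_eval; apply/prodf_neq0 => k _; apply: xk_sub_neq0.
have -> : (hpoly x)^`().[z] = (hpoly x).[z] * \sum_k u z k.
  rewrite {1}/hpoly deriv_prod_ord; last first.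
    by move=> k; rewrite hornerD hornerN hornerC hornerX xk_sub_neq0.
  rewrite -/(hpoly x); congr (_ * _); apply: eq_bigr => k _.
  rewrite derivD derivC derivN derivX add0r hornerN hornerC hornerD hornerN hornerC hornerX /u.
  rewrite mulN1r -invrN opprB //.
have s0 : \sum_k u z k != 0 by apply: sumu_neq0.
have nn : (n%:R : R[i]) != 0 by rewrite pnatr_eq0 -lt0n.
by congr (_ - _); field; rewrite s0 h0 nn.
Qed.
Lemma natC (m : nat) : (m%:R : R[i]) = (m%:R : R)%:C.
Proof. by rewrite rmorph_nat. Qed.
Lemma invC (r : R) : (r%:C)^-1 = (r^-1)%:C.
Proof. by rewrite fmorphV. Qed.
Lemma ReMr w (r : R) : complex.Re (w * r%:C) = complex.Re w * r.
Proof. by case: w => a b /=; rewrite mulr0 subr0. Qed.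
Lemma ImMr w (r : R) : complex.Im (w * r%:C) = complex.Im w * r.
Proof. by case: w => a b /=; rewrite mulr0 add0r. Qed.
Lemma ReDivN w : complex.Re (w / n%:R) = complex.Re w / n%:R.
Proof. by rewrite natC invC ReMr. Qed.
Lemma ImDivN w : complex.Im (w / n%:R) = complex.Im w / n%:R.
Proof. by rewrite natC invC ImMr. Qed.
Lemma sqV w : sq (w^-1) = (sq w)^-1.
Proof.
rewrite /sq ReV ImV -/(sq w); have [->|h] := eqVneq (sq w) 0.
  by rewrite invr0 !mulr0 expr0n /= addr0.
by rewrite /sq; field; rewrite -/(sq w).
Qed.
Lemma sqM w v : sq (w * v) = sq w * sq v.
Proof. by case: w => a b; case: v => c d; rewrite /sq /=; ring. Qed.
Lemma sqN w : sq (- w) = sq w.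
Proof. by rewrite /sq ReN ImN !sqrrN. Qed.
Lemma sq_eq0 w : sq w = 0 -> w = 0.
Proof. case: w => a b; rewrite /sq /= => h.
have ha : a = 0 by apply/eqP; rewrite -sqrf_eq0; apply/eqP; nra.
have hb : b = 0 by apply/eqP; rewrite -sqrf_eq0; apply/eqP; nra.
by rewrite ha hb.
Qed.
Lemma sq_neq0 w : w != 0 -> 0 < sq w.
Proof. move=> h; rewrite lt_neqAle sq_ge0 andbT eq_sym; apply/eqP => /sq_eq0; exact/eqP. Qed.

Definition M2 z := (\sum_k sq (u z k)) / n%:R.
Definition Var z := (\sum_k sq (u z k - Ez z)) / n%:R.
Definition Cov z w := (\sum_k (u z k - Ez z) * (u w k - Ez w)) / n%:R.

Lemma sq_u z k : sq (u z k) = (sq (z - (x k)%:C))^-1.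
Proof. by rewrite /u sqV. Qed.

Lemma Im_Ez z : complex.Im (Ez z) = - complex.Im z * M2 z.
Proof.
rewrite /Ez ImDivN Im_sumu /M2 mulrA; congr (_ * _ / _).
by apply: eq_bigr => k _; rewrite sq_u.
Qed.

Lemma var_gen (f : 'I_n -> R[i]) : (0 < n)%N ->
  \sum_k sq (f k - (\sum_k f k) / n%:R) = \sum_k sq (f k) - n%:R * sq ((\sum_k f k) / n%:R).
Proof.
move=> n0; set a := (\sum_k f k) / n%:R.
have nn : (n%:R : R) != 0 by rewrite pnatr_eq0 -lt0n.
have hRe : \sum_k complex.Re (f k) = n%:R * complex.Re a by rewrite /a ReDivN ReSum mulrC divfK.
have hIm : \sum_k complex.Im (f k) = n%:R * complex.Im a by rewrite /a ImDivN ImSum mulrC divfK.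
have pt : forall k, sq (f k - a) = sq (f k) - (2 * complex.Re a) * complex.Re (f k)
                     - (2 * complex.Im a) * complex.Im (f k) + sq a.
  by move=> k; rewrite /sq ReD ImD ReN ImN; ring.
rewrite (eq_bigr _ (fun k _ => pt k)) !big_split /=.
rewrite !sumrN -!mulr_sumr hRe hIm !sumr_const card_ord.
rewrite -(mulr_natl (complex.Re a)) -(mulr_natl (complex.Im a)) /sq; ring.
Qed.

Lemma Var_M2 z : (0 < n)%N -> Var z = M2 z - sq (Ez z).
Proof.
move=> n0; have nn : (n%:R : R) != 0 by rewrite pnatr_eq0 -lt0n.
rewrite /Var /Ez var_gen // /M2; field.
by rewrite nn.
Qed.

Lemma Im_qmap z : (0 < n)%N -> complex.Im z != 0 ->
  complex.Im (qmap x z) = - complex.Im z * Var z / sq (Ez z).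
Proof.
move=> n0 hz; rewrite qmap_E // ImD ImN ImV Im_Ez Var_M2 //.
have : Ez z != 0.
  rewrite /Ez mulf_neq0 ?sumu_neq0 // invr_eq0 pnatr_eq0 -lt0n //.
move/sq_neq0 => h; field; by rewrite gt_eqF.
Qed.
Lemma sub_x_neq0 z k : complex.Im z != 0 -> z - (x k)%:C != 0.
Proof. by move=> hz; rewrite -opprB oppr_eq0 xk_sub_neq0. Qed.

Definition Pzw z w := (\sum_k u z k * u w k) / n%:R.

Lemma Cov_P z w : (0 < n)%N -> Cov z w = Pzw z w - Ez z * Ez w.
Proof.
move=> n0; have nn : (n%:R : R[i]) != 0 by rewrite pnatr_eq0 -lt0n.
rewrite /Cov /Pzw.
have pt : forall k, (u z k - Ez z) * (u w k - Ez w) =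
   u z k * u w k - Ez w * u z k - Ez z * u w k + Ez z * Ez w by move=> k; ring.
rewrite (eq_bigr _ (fun k _ => pt k)) !big_split /= !sumrN -!mulr_sumr sumr_const card_ord.
rewrite -mulr_natl /Ez; field; exact: nn.
Qed.

Lemma qdiff z w : (0 < n)%N -> complex.Im z != 0 -> complex.Im w != 0 ->
  qmap x z - qmap x w = - (z - w) * Cov z w / (Ez z * Ez w).
Proof.
move=> n0 hz hw; rewrite !qmap_E // Cov_P //.
have hu : forall k, u w k = u z k + (z - w) * (u z k * u w k).
  move=> k; rewrite /u; field.
  by rewrite (sub_x_neq0 _ k hz) (sub_x_neq0 _ k hw).
have hE : Ez w = Ez z + (z - w) * Pzw z w.
  rewrite /Ez /Pzw (eq_bigr _ (fun k _ => hu k)) big_split /= -mulr_sumr; ring.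
have a0 : Ez z != 0 by rewrite /Ez mulf_neq0 ?sumu_neq0 // invr_eq0 pnatr_eq0 -lt0n.
have b0 : Ez w != 0 by rewrite /Ez mulf_neq0 ?sumu_neq0 // invr_eq0 pnatr_eq0 -lt0n.
move: b0; rewrite hE => b0; field.
by rewrite a0 b0.
Qed.
Lemma gram_pt (p s l : R[i]) :
  sq (p - l * conjc s) = sq p - 2 * complex.Re (conjc l * (p * s)) + sq l * sq s.
Proof. by case: p => a b; case: s => c d; case: l => e f; rewrite /sq /=; ring. Qed.

Lemma gram m (p s : 'I_m -> R[i]) : 0 < \sum_k sq (s k) ->
  (\sum_k sq (p k - ((\sum_k p k * s k) * ((\sum_k sq (s k))^-1)%:C) * conjc (s k)))
     * (\sum_k sq (s k))
  = (\sum_k sq (p k)) * (\sum_k sq (s k)) - sq (\sum_k p k * s k).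
Proof.
set Vs := \sum_k sq (s k); set Cc := \sum_k p k * s k; set l := Cc * _.
move=> Vp.
rewrite (eq_bigr _ (fun k _ => gram_pt (p k) (s k) l)) !big_split /= sumrN.
rewrite -mulr_sumr -mulr_sumr -ReSum -mulr_sumr -/Cc -/Vs.
have h1 : complex.Re (conjc l * Cc) = sq Cc / Vs.
  have g : forall (C : R[i]) (r : R), complex.Re (conjc (C * r%:C) * C) = sq C * r.
    by move=> [a b] r; rewrite /sq /=; ring.
  by rewrite /l g.
have h2 : sq l = sq Cc / Vs ^+ 2.
  by rewrite /l sqM /sq /= expr0n /= addr0 exprVn.
rewrite h1 h2; field; by rewrite gt_eqF.
Qed.
Lemma RC_neq (a b : R) : a != b -> (a%:C - b%:C : R[i]) != 0.
Proof. move=> ab; rewrite -rmorphB /=; apply/eqP => /(congr1 (@complex.Re R)) /= /eqP.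
by rewrite subr_eq0 (negbTE ab). Qed.

Definition Bf (z W : R[i]) (a b d : R) : R[i] :=
  (z - a%:C) * (W - a%:C) * ((z - b%:C) * (z - d%:C) / ((a%:C - b%:C) * (a%:C - d%:C))).
Definition rf (z W l c : R[i]) (a : R) : R[i] := (z - a%:C)^-1 - l * (W - a%:C)^-1 - c.

Lemma interp (z W l c : R[i]) (a0 a1 a2 : R) : a0 != a1 -> a0 != a2 -> a1 != a2 ->
  z - a0%:C != 0 -> z - a1%:C != 0 -> z - a2%:C != 0 ->
  W - a0%:C != 0 -> W - a1%:C != 0 -> W - a2%:C != 0 ->
  W - z = rf z W l c a0 * Bf z W a0 a1 a2 + rf z W l c a1 * Bf z W a1 a0 a2
        + rf z W l c a2 * Bf z W a2 a0 a1.
Proof.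
move=> h01 h02 h12 z0 z1 z2 W0 W1 W2; rewrite /rf /Bf.
have d01 := RC_neq _ _ h01; have d02 := RC_neq _ _ h02; have d12 := RC_neq _ _ h12.
have d10 : (a1%:C - a0%:C : R[i]) != 0 by rewrite -opprB oppr_eq0.
have d20 : (a2%:C - a0%:C : R[i]) != 0 by rewrite -opprB oppr_eq0.
have d21 : (a2%:C - a1%:C : R[i]) != 0 by rewrite -opprB oppr_eq0.
field.
by rewrite d01 d02 d12 d10 d20 d21 z0 z1 z2 W0 W1 W2.
Qed.

Lemma sq3 (p q r : R[i]) : sq (p + q + r) <= 3 * (sq p + sq q + sq r).
Proof.
have h : forall a c e : R, (a + c + e) ^+ 2 <= 3 * (a ^+ 2 + c ^+ 2 + e ^+ 2).
  move=> a c e; have := sqr_ge0 (a - c); have := sqr_ge0 (a - e); have := sqr_ge0 (c - e).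
  nra.
case: p => a b; case: q => c d; case: r => e f; rewrite /sq /=.
have := h a c e; have := h b d f; lra.
Qed.

Lemma cross3 (r0 r1 r2 b0 b1 b2 : R) : 0 <= r0 -> 0 <= r1 -> 0 <= r2 ->
  0 <= b0 -> 0 <= b1 -> 0 <= b2 ->
  3 * (r0 * b0 + r1 * b1 + r2 * b2) <= 3 * (r0 + r1 + r2) * (b0 + b1 + b2).
Proof.
move=> *.
have : 0 <= r0 * b1 + r0 * b2 + r1 * b0 + r1 * b2 + r2 * b0 + r2 * b1.
  by rewrite !addr_ge0 // mulr_ge0.
nra.
Qed.

Lemma LB (z W l c : R[i]) (a0 a1 a2 : R) : a0 != a1 -> a0 != a2 -> a1 != a2 ->
  z - a0%:C != 0 -> z - a1%:C != 0 -> z - a2%:C != 0 ->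
  W - a0%:C != 0 -> W - a1%:C != 0 -> W - a2%:C != 0 ->
  sq (W - z) <= 3 * (sq (rf z W l c a0) + sq (rf z W l c a1) + sq (rf z W l c a2))
                  * (sq (Bf z W a0 a1 a2) + sq (Bf z W a1 a0 a2) + sq (Bf z W a2 a0 a1)).
Proof.
move=> h01 h02 h12 z0 z1 z2 W0 W1 W2.
rewrite (interp z W l c a0 a1 a2 h01 h02 h12 z0 z1 z2 W0 W1 W2).
apply: (le_trans (sq3 _ _ _)); rewrite !sqM.
apply: cross3; by rewrite ?mulr_ge0 ?invr_ge0 ?sq_ge0.
Qed.
Hypothesis n3 : (2 < n)%N.
Hypothesis xinj : injective x.

Lemma n0P : (0 < n)%N. Proof. exact: leq_trans n3. Qed.
Lemma n1P : (1 < n)%N. Proof. exact: leq_trans n3. Qed.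
Definition i0 : 'I_n := Ordinal n0P.
Definition i1 : 'I_n := Ordinal n1P.
Definition i2 : 'I_n := Ordinal n3.
Definition x0 := x i0.
Definition x1 := x i1.
Definition x2 := x i2.
Lemma x01 : x0 != x1. Proof. by apply/eqP => /xinj /(congr1 val). Qed.
Lemma x02 : x0 != x2. Proof. by apply/eqP => /xinj /(congr1 val). Qed.
Lemma x12 : x1 != x2. Proof. by apply/eqP => /xinj /(congr1 val). Qed.

Definition K3 z W := sq (Bf z W x0 x1 x2) + sq (Bf z W x1 x0 x2) + sq (Bf z W x2 x0 x1).

Lemma K3_ge0 z W : 0 <= K3 z W.
Proof. by rewrite /K3; apply: addr_ge0; [apply: addr_ge0|]; apply: sq_ge0. Qed.

Lemma sum3 (f : 'I_n -> R) : (forall k, 0 <= f k) -> f i0 + f i1 + f i2 <= \sum_k f k.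
Proof.
move=> f0; rewrite (bigD1 i0) // (bigD1 i1) //= (bigD1 i2) //=.
have : 0 <= \sum_(i < n | (i != i0) && (i != i1) && (i != i2)) f i by apply: sumr_ge0.
lra.
Qed.

Lemma LBx z W l c : complex.Im z != 0 -> complex.Im W != 0 ->
  sq (W - z) <= 3 * (sq (rf z W l c x0) + sq (rf z W l c x1) + sq (rf z W l c x2)) * K3 z W.
Proof.
move=> hz hW; apply: LB; rewrite ?x01 ?x02 ?x12 //; exact: sub_x_neq0.
Qed.

Lemma nR0 : (n%:R : R) != 0. Proof. by rewrite pnatr_eq0 -lt0n n0P. Qed.
Lemma nR_gt0 : (0 : R) < n%:R. Proof. by rewrite ltr0n n0P. Qed.

Lemma sumVar z : \sum_k sq (u z k - Ez z) = n%:R * Var z.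
Proof. by rewrite /Var mulrC divfK // nR0. Qed.

Lemma Var_pos z : complex.Im z != 0 -> 0 < Var z.
Proof.
move=> hz.
have hW : complex.Im (conjc z) != 0 by case: z hz => a b /=; rewrite oppr_eq0.
have := LBx z (conjc z) 0 (Ez z) hz hW.
have e : forall k, rf z (conjc z) 0 (Ez z) (x k) = u z k - Ez z by move=> k; rewrite /rf /u mul0r subr0.
rewrite !e.
have s3 := sum3 (fun k => sq (u z k - Ez z)) (fun k => sq_ge0 _).
rewrite /= sumVar in s3.
have hs : 0 < sq (conjc z - z).
  apply: sq_gtIm; case: z hz {hW e s3} => a b /=; rewrite -opprD oppr_eq0 => hb.
  by rewrite -mulr2n mulrn_eq0 negb_or hb.
have K0 := K3_ge0 z (conjc z).
move=> h.
have h3 : 0 < sq (u z i0 - Ez z) + sq (u z i1 - Ez z) + sq (u z i2 - Ez z).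
  rewrite lt_neqAle; apply/andP; split; last by apply: addr_ge0; [apply: addr_ge0|]; apply: sq_ge0.
  rewrite eq_sym; apply/eqP => e0.
  by move: h; rewrite e0 mulr0 mul0r => /(lt_le_trans hs); rewrite ltxx.
have := nR_gt0.
nra.
Qed.

Lemma conj_u w k : conjc (u w k) = u (conjc w) k.
Proof. by rewrite /u conjc_inv rmorphB /= oppr0. Qed.

Lemma sqRC (r : R) : sq (r%:C) = r ^+ 2.
Proof. by rewrite /sq /= expr0n /= addr0. Qed.

Lemma strict z w : complex.Im z != 0 -> complex.Im w != 0 ->
  Var w * sq (conjc w - z) <= 3 * K3 z (conjc w) * (n%:R * (Var z * Var w - sq (Cov z w))).
Proof.
move=> hz hw.
have hW : complex.Im (conjc w) != 0 by case: w hw => a b /=; rewrite oppr_eq0.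
pose p k := u z k - Ez z; pose s k := u w k - Ez w.
have Vs : \sum_k sq (s k) = n%:R * Var w by rewrite sumVar.
have Vp : \sum_k sq (p k) = n%:R * Var z by rewrite sumVar.
have Cc : \sum_k p k * s k = n%:R * Cov z w by rewrite /Cov mulrC divfK // pnatr_eq0 -lt0n n0P.
have Vw := Var_pos _ hw.
have Vsp : 0 < \sum_k sq (s k) by rewrite Vs mulr_gt0 // nR_gt0.
have G := gram _ p s Vsp.
set l' := (\sum_k p k * s k) * _ in G.
set c := Ez z - l' * conjc (Ez w).
have pt : forall k, p k - l' * conjc (s k) = rf z (conjc w) l' c (x k).
  by move=> k; rewrite /p /s /rf /c rmorphB /= conj_u /u; ring.
have G' : (\sum_k sq (rf z (conjc w) l' c (x k))) * \sum_k sq (s k)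
    = (\sum_k sq (p k)) * (\sum_k sq (s k)) - sq (\sum_k p k * s k).
  by rewrite -G; congr (_ * _); apply: eq_bigr => k _; rewrite pt.
move: G' => {G} G.
have s3 := sum3 (fun k => sq (rf z (conjc w) l' c (x k))) (fun k => sq_ge0 _).
have L := LBx z (conjc w) l' c hz hW.
rewrite Vs Vp Cc sqM natC sqRC in G.
have K0 := K3_ge0 z (conjc w).
set S3 := _ + _ + _ in L s3.
set Sa := \sum_k _ in G s3.
have S3p : 0 <= S3 by rewrite /S3; apply: addr_ge0; [apply: addr_ge0|]; apply: sq_ge0.
have nz := nR_gt0.
have e : Sa * Var w = n%:R * (Var z * Var w - sq (Cov z w)).
  apply: (mulfI nR0); rewrite mulrA (mulrC n%:R) -mulrA G; ring.
rewrite -e.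
have : Var w * sq (conjc w - z) <= Var w * (3 * S3 * K3 z (conjc w)) by rewrite ler_pM2l.
have : Var w * (3 * S3 * K3 z (conjc w)) <= Var w * (3 * Sa * K3 z (conjc w)).
  rewrite ler_pM2l // -!mulrA ler_pM2l // ler_wpM2r //.
nra.
Qed.
Lemma poly_min (p : {poly R}) (a b c : R) : a < c -> c < b ->
  (forall t, a < t -> t < b -> p.[c] <= p.[t]) -> p^`().[c] = 0.
Proof.
move=> ac cb hmin.
have H : is_derive c (1:R) (horner p) 0.
  apply: (@derive1_at_min R (horner p) a b c).
  - by apply: ltW; apply: lt_trans ac cb.
  - by move=> t _; apply: derivable_horner.
  - by rewrite in_itv /= ac cb.
  - by move=> t; rewrite in_itv /= => /andP[h1 h2]; apply: hmin.
have H2 := is_derive_poly p c.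
by rewrite -(@derive_val _ _ _ _ _ _ _ H) (@derive_val _ _ _ _ _ _ _ H2).
Qed.
Lemma div_le_inv (c A G : R) : 0 < c -> 0 < A -> 0 < G -> c / A <= c / G -> G <= A.
Proof.
move=> c0 A0 G0; rewrite ler_pdivrMr // mulrAC ler_pdivlMr // ler_pM2l //.
Qed.

Lemma lik_eq t : lik x t = (complex.Im t / pi) ^+ n /
   \prod_j ((x j - complex.Re t) ^+ 2 + complex.Im t ^+ 2).
Proof.
rewrite /lik -prodfV.
have -> : (complex.Im t / pi) ^+ n = \prod_(j < n) (complex.Im t / pi) by rewrite prodr_const card_ord.
rewrite -big_split /=.
apply: eq_bigr => j _; rewrite invfM mulrA //.
Qed.

Lemma prod_pos (f : 'I_n -> R) : (forall j, 0 < f j) -> 0 < \prod_j f j.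
Proof. by move=> h; apply: prodr_gt0 => j _. Qed.

Variable th : R[i].
Hypothesis Hmle : is_mle x th.

Definition mu := complex.Re th.
Definition sg := complex.Im th.
Definition gg j := (x j - mu) ^+ 2 + sg ^+ 2.

Lemma sg_gt0 : 0 < sg. Proof. by case: Hmle. Qed.
Lemma gg_gt0 j : 0 < gg j.
Proof. rewrite /gg; have := sg_gt0; have := sqr_ge0 (x j - mu); nra. Qed.

Lemma mle_cmp t : 0 < complex.Im t ->
  (complex.Im t / pi) ^+ n / \prod_j ((x j - complex.Re t) ^+ 2 + complex.Im t ^+ 2)
  <= (sg / pi) ^+ n / \prod_j gg j.
Proof. by move=> ht; rewrite -lik_eq /gg /sg /mu -lik_eq; case: Hmle => _; apply. Qed.

Lemma mle_mu : \sum_j (x j - mu) / gg j = 0.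
Proof.
pose P j : {poly R} := ((x j - mu)%:P - 'X) * ((x j - mu)%:P - 'X) + (sg ^+ 2)%:P.
have Pe : forall j s, (P j).[s] = (x j - (mu + s)) ^+ 2 + sg ^+ 2.
  by move=> j s; rewrite /P !hornerE; ring.
have gge : forall j, (P j).[0] = gg j by move=> j; rewrite Pe addr0.
have P0 : forall j, (P j).[0] != 0 by move=> j; rewrite gge gt_eqF // gg_gt0.
have hmin : forall s, (\prod_j P j).[0] <= (\prod_j P j).[s].
  move=> s; rewrite !horner_prod (eq_bigr _ (fun j _ => gge j)) (eq_bigr _ (fun j _ => Pe j s)).
  have := mle_cmp ((mu + s) +i* sg) sg_gt0 => /=.
  apply: div_le_inv.
  - by rewrite exprn_gt0 // divr_gt0 // ?sg_gt0 // pi_gt0.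
  - by apply: prod_pos => j; have := sg_gt0; have := sqr_ge0 (x j - (mu + s)); nra.
  - by apply: prod_pos => j; apply: gg_gt0.
have F := poly_min _ (-1) 1 0 (ltrN10 _) ltr01 (fun t _ _ => hmin t).
rewrite deriv_prod_ord // in F.
have Pn0 : (\prod_j P j).[0] != 0 by rewrite horner_prod; apply/prodf_neq0 => j _; exact: P0.
move/eqP: F; rewrite mulf_eq0 (negbTE Pn0) orFb => /eqP F.
have hd : forall j, (P j)^`().[0] / (P j).[0] = -2 * ((x j - mu) / gg j).
  move=> j; rewrite gge /P derivD derivM !derivB !derivC derivX !hornerE subr0 /=; congr (_ / _); ring.
rewrite (eq_bigr _ (fun j _ => hd j)) -mulr_sumr in F.
by move/eqP: F; rewrite mulf_eq0 oppr_eq0 pnatr_eq0 /= => /eqP.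
Qed.
Lemma div_le_inv2 (c d A G : R) : 0 < c -> 0 < A -> 0 < G -> c * d / A <= c / G -> d * G <= A.
Proof.
move=> c0 A0 G0; rewrite ler_pdivrMr // mulrAC ler_pdivlMr // -mulrA ler_pM2l //.
Qed.

Lemma mle_sg : \sum_j (gg j)^-1 = n%:R / (2 * sg ^+ 2).
Proof.
pose P j : {poly R} := ((x j - mu) ^+ 2)%:P + (sg ^+ 2)%:P * ('X * 'X).
pose G := \prod_j gg j.
have G0 : 0 < G by apply: prod_pos => j; apply: gg_gt0.
pose Q := \prod_j P j - G%:P * 'X^n.
have Pe : forall j s, (P j).[s] = (x j - mu) ^+ 2 + (sg * s) ^+ 2.
  by move=> j s; rewrite /P !hornerD !hornerM !hornerC !hornerX; ring.
have P1 : forall j, (P j).[1] = gg j by move=> j; rewrite Pe mulr1.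
have Qe : forall s, Q.[s] = (\prod_j P j).[s] - G * s ^+ n.
  by move=> s; rewrite /Q hornerD hornerN hornerM hornerC hornerXn.
have hmin : forall s, 0 < s -> s < 2 -> Q.[1] <= Q.[s].
  move=> s s0 s2; rewrite !Qe !horner_prod (eq_bigr _ (fun j _ => P1 j)) -/G expr1n mulr1 subrr.
  rewrite subr_ge0 (eq_bigr _ (fun j _ => Pe j s)) mulrC.
  have := mle_cmp (mu +i* (sg * s)) (mulr_gt0 sg_gt0 s0) => /=.
  rewrite mulrAC exprMn.
  apply: div_le_inv2.
  - by rewrite exprn_gt0 // divr_gt0 // ?sg_gt0 // pi_gt0.
  - apply: prod_pos => j; have := mulr_gt0 sg_gt0 s0 => h.
    have := sqr_ge0 (x j - mu); have := exprn_gt0 2 h; lra.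
  - exact: G0.
have F := poly_min _ 0 2 1 ltr01 (ltr_nat _ 1 2) hmin.
have P0 : forall j, (P j).[1] != 0 by move=> j; rewrite P1 gt_eqF // gg_gt0.
rewrite /Q derivB derivM derivC mul0r add0r derivXn hornerD hornerN hornerM hornerC in F.
rewrite hornerMn hornerXn expr1n deriv_prod_ord // horner_prod in F.
rewrite (eq_bigr _ (fun j _ => P1 j)) -/G in F.
have hd : forall j, (P j)^`().[1] / (P j).[1] = (2 * sg ^+ 2) * (gg j)^-1.
  move=> j; rewrite P1 /P derivD derivC add0r derivM derivC mul0r add0r derivM derivX mul1r mulr1 hornerM hornerC hornerD hornerX -mulr2n mulr2n.
  by rewrite (mulrC (sg ^+ 2)).
rewrite (eq_bigr _ (fun j _ => hd j)) -mulr_sumr in F.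
have sg0 : 2 * sg ^+ 2 != 0 by rewrite mulf_neq0 // expf_neq0 // gt_eqF // sg_gt0.
apply: (mulfI sg0); rewrite [RHS]mulrC divfK //.
have Gn : G != 0 by rewrite gt_eqF.
by apply: (mulfI Gn); move/eqP: F; rewrite subr_eq0 => /eqP.
Qed.
Lemma sq_th_x k : sq (th - (x k)%:C) = gg k.
Proof. by rewrite /sq ReD ImD ReN ImN ReRC ImRC oppr0 addr0 /gg -/mu -/sg -sqrrN opprB. Qed.

Lemma Re_Ez_th : complex.Re (Ez th) = 0.
Proof.
rewrite /Ez ReDivN ReSum.
have e : forall k, complex.Re (u th k) = - ((x k - mu) / gg k).
  by move=> k; rewrite /u ReV sq_th_x ReD ReN ReRC -mulNr opprB.
by rewrite (eq_bigr _ (fun k _ => e k)) sumrN mle_mu oppr0 mul0r.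
Qed.

Lemma Im_Ez_th : complex.Im (Ez th) = - (2 * sg)^-1.
Proof.
rewrite /Ez ImDivN Im_sumu.
rewrite (eq_bigr _ (fun k _ => congr1 GRing.inv (sq_th_x k))) mle_sg -/sg.
have s0 := sg_gt0; field.
by rewrite nR0 gt_eqF.
Qed.

Lemma sg_neq0 : sg != 0. Proof. by rewrite gt_eqF // sg_gt0. Qed.

Lemma q_th : qmap x th = conjc th.
Proof.
rewrite qmap_E ?n0P ?sg_neq0 //.
have sqE : sq (Ez th) = (2 * sg)^-2 by rewrite /sq Re_Ez_th Im_Ez_th expr0n /= add0r sqrrN exprVn.
apply/eqP; rewrite eq_complex; apply/andP; split; apply/eqP.
  by rewrite ReD ReN ReV Re_Ez_th mul0r oppr0 addr0; case: (th).
rewrite ImD ImN ImV Im_Ez_th sqE -/sg.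
have : complex.Im (conjc th) = - sg by rewrite /sg; case: (th).
move=> ->; have s0 := sg_neq0; field.
by rewrite s0.
Qed.

Lemma Ez_conj z : Ez (conjc z) = conjc (Ez z).
Proof.
rewrite /Ez rmorphM rmorph_sum /= fmorphV rmorph_nat; congr (_ * _).
by apply: eq_bigr => k _; rewrite conj_u.
Qed.

Lemma Im_conj z : complex.Im (conjc z) = - complex.Im z. Proof. by case: z. Qed.

Lemma q_conj z : complex.Im z != 0 -> qmap x (conjc z) = conjc (qmap x z).
Proof.
move=> hz; rewrite !qmap_E ?n0P // ?Im_conj ?oppr_eq0 //.
by rewrite rmorphB fmorphV Ez_conj.
Qed.

Lemma q_conj_th : qmap x (conjc th) = th.
Proof. by rewrite q_conj ?sg_neq0 // q_th conjcK. Qed.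

Lemma Q_th : Qmap x th = th.
Proof. by rewrite /Qmap q_th q_conj_th. Qed.
Lemma Ez_neq0 z : complex.Im z != 0 -> Ez z != 0.
Proof. by move=> hz; rewrite /Ez mulf_neq0 ?sumu_neq0 ?n0P // invr_eq0 pnatr_eq0 -lt0n n0P. Qed.

Definition rho (a b : R[i]) := sq (a - b) / (complex.Im a * complex.Im b).

Lemma step_eq z w : complex.Im z != 0 -> complex.Im w != 0 ->
  sq (qmap x z - qmap x w) * (complex.Im z * complex.Im w) * (Var z * Var w)
  = sq (z - w) * (complex.Im (qmap x z) * complex.Im (qmap x w)) * sq (Cov z w).
Proof.
move=> hz hw; rewrite qdiff ?n0P // !Im_qmap ?n0P //.
have a0 := Ez_neq0 _ hz; have b0 := Ez_neq0 _ hw.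
move: (Ez z) (Ez w) (Cov z w) a0 b0 => a b C a0 b0.
rewrite !sqM sqN sqV sqM.
have a1 := sq_neq0 _ a0; have b1 := sq_neq0 _ b0.
by field; rewrite !gt_eqF.
Qed.

Lemma Im_q_prod z w : complex.Im z != 0 -> complex.Im w != 0 ->
  complex.Im (qmap x z) * complex.Im (qmap x w) =
  complex.Im z * complex.Im w * (Var z * Var w) / (sq (Ez z) * sq (Ez w)).
Proof.
move=> hz hw; rewrite !Im_qmap ?n0P //.
have a0 := sq_neq0 _ (Ez_neq0 _ hz); have b0 := sq_neq0 _ (Ez_neq0 _ hw).
by field; rewrite !gt_eqF.
Qed.

Lemma Im_q_sign z w : 0 < complex.Im z * complex.Im w ->
  0 < complex.Im (qmap x z) * complex.Im (qmap x w).
Proof.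
move=> h.
have hz : complex.Im z != 0 by apply/eqP => e; move: h; rewrite e mul0r ltxx.
have hw : complex.Im w != 0 by apply/eqP => e; move: h; rewrite e mulr0 ltxx.
rewrite Im_q_prod //.
have a0 := sq_neq0 _ (Ez_neq0 _ hz); have b0 := sq_neq0 _ (Ez_neq0 _ hw).
apply: divr_gt0; first (apply: mulr_gt0 => //; apply: mulr_gt0; exact: Var_pos).
exact: mulr_gt0.
Qed.

Lemma sqd_pos z w : 0 < complex.Im z * complex.Im w -> 0 < sq (conjc w - z).
Proof.
move=> h; apply: sq_gtIm; rewrite ImD ImN Im_conj -opprD oppr_eq0.
apply/eqP => e.
have : complex.Im w = - complex.Im z by apply/eqP; rewrite -addr_eq0 e.
by move=> e2; move: h; rewrite e2 mulrN -expr2 oppr_gt0 ltNge sqr_ge0.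
Qed.

Lemma rho_step z w : 0 < complex.Im z * complex.Im w ->
  rho (qmap x z) (qmap x w) * (Var z * Var w) = rho z w * sq (Cov z w).
Proof.
move=> h.
have hz : complex.Im z != 0 by apply/eqP => e; move: h; rewrite e mul0r ltxx.
have hw : complex.Im w != 0 by apply/eqP => e; move: h; rewrite e mulr0 ltxx.
have h2 := Im_q_sign _ _ h.
have E := step_eq _ _ hz hw.
rewrite /rho.
move: E h h2; set A := complex.Im z * complex.Im w; set B := complex.Im (qmap x z) * _.
move=> E h h2.
have An := lt0r_neq0 h; have Bn := lt0r_neq0 h2.
apply: (mulIf (mulf_neq0 An Bn)).
have -> : sq (qmap x z - qmap x w) / B * (Var z * Var w) * (A * B)
   = sq (qmap x z - qmap x w) * A * (Var z * Var w) by field.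
have -> : sq (z - w) / A * sq (Cov z w) * (A * B) = sq (z - w) * B * sq (Cov z w) by field.
exact: E.
Qed.
Lemma Imnz z w : 0 < complex.Im z * complex.Im w -> complex.Im z != 0 /\ complex.Im w != 0.
Proof.
move=> h; split; apply/eqP => e; move: h; rewrite e ?mul0r ?mulr0 ltxx //.
Qed.

Lemma cs z w : 0 < complex.Im z * complex.Im w ->
  sq (Cov z w) < Var z * Var w /\ 0 < K3 z (conjc w).
Proof.
move=> h; have [hz hw] := Imnz _ _ h.
have S := strict _ _ hz hw.
have d0 := sqd_pos _ _ h.
have Vw := Var_pos _ hw; have Vz := Var_pos _ hz.
have K0 := K3_ge0 z (conjc w).
have nz := nR_gt0.
have L : 0 < 3 * K3 z (conjc w) * (n%:R * (Var z * Var w - sq (Cov z w))).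
  by apply: lt_le_trans S; apply: mulr_gt0.
have Kp : 0 < K3 z (conjc w).
  by rewrite lt_neqAle K0 andbT eq_sym; apply/eqP => e; move: L; rewrite e mulr0 mul0r ltxx.
split => //.
rewrite -subr_gt0; move: L; rewrite mulrA.
have P : 0 < 3 * K3 z (conjc w) * n%:R by rewrite !mulr_gt0.
move: P; set D := _ - _; set P' := _ * n%:R.
nra.
Qed.

Lemma rho_q z w : 0 < complex.Im z * complex.Im w ->
  rho (qmap x z) (qmap x w) = rho z w * (sq (Cov z w) / (Var z * Var w)).
Proof.
move=> h; have [hz hw] := Imnz _ _ h.
have V : Var z * Var w != 0 by rewrite mulf_neq0 // lt0r_neq0 // Var_pos.
by rewrite mulrA -rho_step // mulfK.
Qed.

Lemma rho_ge0 z w : 0 < complex.Im z * complex.Im w -> 0 <= rho z w.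
Proof. by move=> h; rewrite /rho divr_ge0 ?sq_ge0 // ltW. Qed.

Lemma rho_q_le z w : 0 < complex.Im z * complex.Im w ->
  rho (qmap x z) (qmap x w) <= rho z w.
Proof.
move=> h; have [hz hw] := Imnz _ _ h; rewrite rho_q //.
have [c _] := cs _ _ h.
have V : 0 < Var z * Var w by rewrite mulr_gt0 // Var_pos.
rewrite ler_piMr ?rho_ge0 // ?ler_pdivrMr // ?mul1r ?ltW //.
Qed.

Lemma rho_q_strict z w : 0 < complex.Im z * complex.Im w ->
  rho (qmap x z) (qmap x w) <=
  rho z w * (1 - sq (conjc w - z) / (3 * n%:R * K3 z (conjc w) * Var z)).
Proof.
move=> h; have [hz hw] := Imnz _ _ h; rewrite rho_q //.
have [c K] := cs _ _ h.
have S := strict _ _ hz hw.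
have Vw := Var_pos _ hw; have Vz := Var_pos _ hz.
have nz := nR_gt0.
apply: ler_wpM2l; first exact: rho_ge0.
move: S; set d := sq (conjc w - z); set Kk := K3 z (conjc w); move=> S.
have P : 0 < 3 * n%:R * Kk by rewrite !mulr_gt0.
have VV : 0 < Var z * Var w by rewrite mulr_gt0.
rewrite ler_pdivrMr //.
have e1 : (1 - d / (3 * n%:R * Kk * Var z)) * (Var z * Var w)
        = Var z * Var w - Var w * d / (3 * n%:R * Kk).
  by field; rewrite !lt0r_neq0.
rewrite e1 -(ler_pM2r P) mulrBl divfK ?lt0r_neq0 //.
have e2 : 3 * Kk * (n%:R * (Var z * Var w - sq (Cov z w)))
        = Var z * Var w * (3 * n%:R * Kk) - sq (Cov z w) * (3 * n%:R * Kk) by ring.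
rewrite e2 in S.
by rewrite lerBrDr -lerBrDl.
Qed.
Lemma sq_ge_Im2 w : complex.Im w ^+ 2 <= sq w.
Proof. by rewrite /sq lerDr sqr_ge0. Qed.

Lemma sq_add2 p q : sq (p + q) <= 2 * sq p + 2 * sq q.
Proof.
case: p => a b; case: q => c d; rewrite /sq /=.
have := sqr_ge0 (a - c); have := sqr_ge0 (b - d); nra.
Qed.

Lemma sq_conj w : sq (conjc w) = sq w.
Proof. by case: w => a b; rewrite /sq /= sqrrN. Qed.

Lemma region z D0 : 0 <= D0 -> 0 < complex.Im z -> rho z th <= D0 ->
  [/\ sg / (2 + D0) <= complex.Im z, complex.Im z <= (2 + D0) * sg &
      sq (z - th) <= D0 * (2 + D0) * sg ^+ 2].
Proof.
move=> D00 y0 hr.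
have s0 := sg_gt0.
have hS : sq (z - th) <= D0 * (complex.Im z * sg).
  by move: hr; rewrite /rho -/sg ler_pdivrMr ?mulr_gt0.
have hI : (complex.Im z - sg) ^+ 2 <= sq (z - th).
  by have := sq_ge_Im2 (z - th); rewrite ImD ImN -/sg.
move: hS hI; set y := complex.Im z; set S := sq (z - th) => hS hI.
have b : y <= (2 + D0) * sg by nra.
have a : sg <= (2 + D0) * y by nra.
have D2 : 0 < 2 + D0 by lra.
split => //.
  by rewrite ler_pdivrMr // mulrC.
have : D0 * (y * sg) <= D0 * ((2 + D0) * sg * sg) by rewrite ler_wpM2l // ler_pM2r.
by rewrite expr2; lra.
Qed.

Lemma Var_le z : complex.Im z != 0 -> Var z <= (complex.Im z ^+ 2)^-1.
Proof.
move=> hz; rewrite Var_M2 ?n0P //.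
have : M2 z <= (complex.Im z ^+ 2)^-1.
  rewrite /M2 ler_pdivrMr ?nR_gt0 //.
  have -> : (complex.Im z ^+ 2)^-1 * n%:R = \sum_(k < n) (complex.Im z ^+ 2)^-1.
    by rewrite sumr_const card_ord mulr_natr.
  apply: ler_sum => k _; rewrite sq_u.
  have p1 : 0 < complex.Im z ^+ 2 by rewrite exprn_even_gt0.
  rewrite lef_pV2 ?posrE ?sq_gtIm ?Im_sub_x //.
  by have := sq_ge_Im2 (z - (x k)%:C); rewrite Im_sub_x.
have := sq_ge0 (Ez z); lra.
Qed.
Definition Mb D0 := 2 * (D0 * (2 + D0) * sg ^+ 2) + 2 * (gg i0 + gg i1 + gg i2).
Definition Bb D0 (a b d : R) :=
  Mb D0 * Mb D0 * (Mb D0 * Mb D0 / (sq (a%:C - b%:C) * sq (a%:C - d%:C))).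
Definition Kmax D0 := Bb D0 x0 x1 x2 + Bb D0 x1 x0 x2 + Bb D0 x2 x0 x1.

Lemma sqBf z W a b d : sq (Bf z W a b d) = sq (z - a%:C) * sq (W - a%:C) *
  (sq (z - b%:C) * sq (z - d%:C) / (sq (a%:C - b%:C) * sq (a%:C - d%:C))).
Proof. by rewrite /Bf !sqM sqV sqM. Qed.

Lemma Bf_le z W a b d M : a != b -> a != d ->
  sq (z - a%:C) <= M -> sq (W - a%:C) <= M -> sq (z - b%:C) <= M -> sq (z - d%:C) <= M ->
  sq (Bf z W a b d) <= M * M * (M * M / (sq (a%:C - b%:C) * sq (a%:C - d%:C))).
Proof.
move=> ab ad h1 h2 h3 h4; rewrite sqBf.
have den : 0 < sq (a%:C - b%:C) * sq (a%:C - d%:C).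
  by rewrite mulr_gt0 // sq_neq0 // RC_neq.
have den' := ltW den.
apply: Num.Theory.ler_pM.
- by rewrite mulr_ge0 ?sq_ge0.
- by rewrite divr_ge0 ?mulr_ge0 ?sq_ge0.
- by apply: Num.Theory.ler_pM; rewrite ?sq_ge0.
rewrite ler_pM2r ?invr_gt0 //.
by apply: Num.Theory.ler_pM; rewrite ?sq_ge0.
Qed.

Lemma gg_ge0 k : 0 <= gg k. Proof. exact: ltW (gg_gt0 k). Qed.

Lemma sq_zx_le z D0 k : 0 <= D0 -> 0 < complex.Im z -> rho z th <= D0 ->
  sq (z - (x k)%:C) <= 2 * (D0 * (2 + D0) * sg ^+ 2) + 2 * gg k.
Proof.
move=> D00 y0 hr; have [_ _ hc] := region _ _ D00 y0 hr.
have -> : z - (x k)%:C = (z - th) + (th - (x k)%:C) by rewrite addrA subrK.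
apply: le_trans (sq_add2 _ _) _; rewrite sq_th_x; lra.
Qed.

Lemma K3_le z D0 : 0 <= D0 -> 0 < complex.Im z -> rho z th <= D0 ->
  K3 z (conjc th) <= Kmax D0.
Proof.
move=> D00 y0 hr.
have g0 := gg_ge0 i0; have g1 := gg_ge0 i1; have g2 := gg_ge0 i2.
have hz : forall k, k \in [:: i0; i1; i2] -> sq (z - (x k)%:C) <= Mb D0.
  move=> k hk; apply: le_trans (sq_zx_le _ _ k D00 y0 hr) _; rewrite /Mb lerD2l ler_pM2l //.
  by move: hk; rewrite !inE => /or3P[] /eqP ->; lra.
have hW : forall k, k \in [:: i0; i1; i2] -> sq (conjc th - (x k)%:C) <= Mb D0.
  move=> k hk.
  have -> : conjc th - (x k)%:C = conjc (th - (x k)%:C) by rewrite rmorphB /= oppr0.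
  rewrite sq_conj sq_th_x /Mb.
  have D2 : 0 <= 2 + D0 by lra.
  have : 0 <= D0 * (2 + D0) * sg ^+ 2 by apply: mulr_ge0; [apply: mulr_ge0 | apply: sqr_ge0].
  by move: hk; rewrite !inE => /or3P[] /eqP ->; lra.
have i0in : i0 \in [:: i0; i1; i2] by rewrite !inE eqxx.
have i1in : i1 \in [:: i0; i1; i2] by rewrite !inE eqxx orbT.
have i2in : i2 \in [:: i0; i1; i2] by rewrite !inE eqxx !orbT.
rewrite /K3 /Kmax /Bb.
have x10 : x1 != x0 by rewrite eq_sym x01.
have x20 : x2 != x0 by rewrite eq_sym x02.
have x21 : x2 != x1 by rewrite eq_sym x12.
apply: lerD; [apply: lerD|]; apply: Bf_le; rewrite ?x01 ?x02 ?x12 ?x10 ?x20 ?x21 //;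
  (apply: hz || apply: hW); by rewrite !inE eqxx ?orbT.
Qed.
Lemma mono_ratio (c dmin d K Km V Vm : R) : 0 < c -> 0 < dmin -> dmin <= d ->
  0 < K -> K <= Km -> 0 < V -> V <= Vm -> dmin / (c * Km * Vm) <= d / (c * K * V).
Proof.
move=> c0 dm0 dd K0 KK V0 VV.
have Km0 : 0 < Km by apply: lt_le_trans KK.
have Vm0 : 0 < Vm by apply: lt_le_trans VV.
apply: (@le_trans _ _ (d / (c * Km * Vm))).
  by rewrite ler_pM2r // invr_gt0 !mulr_gt0.
apply: ler_wpM2l; first by apply: ltW; apply: lt_le_trans dd.
rewrite lef_pV2 ?posrE ?mulr_gt0 //.
apply: Num.Theory.ler_pM => //.
- by apply: mulr_ge0; apply: ltW.
- exact: ltW.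
- by apply: Num.Theory.ler_pM => //; apply: ltW.
Qed.

Lemma rho_th_th : rho th th = 0.
Proof. by rewrite /rho subrr /sq /= expr0n /= addr0 mul0r. Qed.

Lemma Im_th : complex.Im th = sg. Proof. by []. Qed.

Lemma contract D0 : 0 <= D0 -> exists eta : R, [/\ 0 < eta, eta <= 1/2 &
  forall z, 0 < complex.Im z -> rho z th <= D0 ->
    0 < complex.Im (Qmap x z) /\ rho (Qmap x z) th <= (1 - eta) * rho z th].
Proof.
move=> D00.
have s0 := sg_gt0.
have D2 : 0 < 2 + D0 by lra.
pose Vm := ((2 + D0) / sg) ^+ 2.
pose Km := Kmax D0.
pose c := 3 * (n%:R : R).
have c0 : 0 < c by rewrite mulr_gt0 // nR_gt0.
have Km0 : 0 < Km.
  have hth : 0 < complex.Im th * complex.Im th by rewrite mulr_gt0.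
  have [_ K] := cs _ _ hth.
  apply: lt_le_trans K (K3_le _ _ D00 s0 _); by rewrite rho_th_th.
have Vm0 : 0 < Vm by rewrite exprn_gt0 // divr_gt0.
pose eta0 := sg ^+ 2 / (c * Km * Vm).
have e0 : 0 < eta0 by apply: divr_gt0; [apply: exprn_gt0 | apply: mulr_gt0; first apply: mulr_gt0].
exists (Num.min eta0 (1/2)); split.
- by rewrite lt_min e0 divr_gt0.
- by rewrite ge_min lexx orbT.
move=> z y0 hr.
have hzt : 0 < complex.Im z * complex.Im th by rewrite mulr_gt0.
have [hz _] := Imnz _ _ hzt.
have [ra rb rc] := region _ _ D00 y0 hr.
have S1 := rho_q_strict _ _ hzt.
rewrite q_th in S1.
have [_ Kp] := cs _ _ hzt.
have Vz := Var_pos _ hz.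
have dge : sg ^+ 2 <= sq (conjc th - z).
  apply: le_trans (sq_ge_Im2 _); rewrite ImD ImN Im_conj -/sg.
  nra.
have Vle : Var z <= Vm.
  apply: le_trans (Var_le _ hz) _.
  rewrite /Vm -invf_div exprVn lef_pV2 ?posrE ?exprn_gt0 ?divr_gt0 //.
  have a0 : 0 <= sg / (2 + D0) by rewrite divr_ge0 // ltW.
  move: ra a0; set a := sg / (2 + D0) => ra a0; nra.
have R1 : eta0 <= sq (conjc th - z) / (3 * n%:R * K3 z (conjc th) * Var z).
  apply: mono_ratio => //; first by rewrite exprn_gt0.
  exact: K3_le.
have h2 : 0 < complex.Im (qmap x z) * complex.Im (qmap x th) by apply: Im_q_sign.
rewrite q_th in h2.
have S2 := rho_q_le _ _ h2.
rewrite q_conj_th in S2.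
have h3 := Im_q_sign _ _ h2.
rewrite q_conj_th in h3.
split.
  by move: h3; rewrite /Qmap pmulr_lgt0.
rewrite /Qmap; apply: le_trans S2 _; apply: le_trans S1 _.
rewrite mulrC; apply: ler_wpM2r; first by apply: rho_ge0.
rewrite lerD2l lerN2; apply: le_trans R1; rewrite ge_min lexx //.
Qed.
Lemma normc_sq w : ComplexField.Normc.normc w = Num.sqrt (sq w).
Proof. by case: w. Qed.

Lemma rho_eq0 z : 0 < complex.Im z -> rho z th = 0 -> z = th.
Proof.
move=> y0; have p : 0 < complex.Im z * complex.Im th by rewrite mulr_gt0 // sg_gt0.
rewrite /rho => /eqP; rewrite mulf_eq0 invr_eq0 (gt_eqF p) orbF => /eqP /sq_eq0 /eqP.
by rewrite subr_eq0 => /eqP.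
Qed.

Lemma iter_bound z : 0 < complex.Im z -> exists eta : R, [/\ 0 < eta, eta <= 1/2 &
  forall m, 0 < complex.Im (iter m (Qmap x) z) /\
            rho (iter m (Qmap x) z) th <= (1 - eta) ^+ m * rho z th].
Proof.
move=> y0.
have D00 : 0 <= rho z th by apply: rho_ge0; rewrite mulr_gt0 // sg_gt0.
have [eta [e0 e1 H]] := contract _ D00.
exists eta; split => // m; elim: m => [|m [IH1 IH2]].
  by rewrite /= expr0 mul1r.
have le1 : (1 - eta) ^+ m <= 1 by rewrite exprn_ile1 //; lra.
have r0 : rho (iter m (Qmap x) z) th <= rho z th.
  by apply: le_trans IH2 _; rewrite ler_piMl.
have [h1 h2] := H _ IH1 r0.
rewrite iterS; split => //.
apply: le_trans h2 _; rewrite exprS -mulrA ler_wpM2l //; lra.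
Qed.

Lemma main_sec :
  ((exists z, inH z /\ z = Qmap x z) /\
   (forall z, inH z -> z = Qmap x z -> z = th)) /\
  Qmap x th = th /\
  (forall z, inH z ->
     ((fun m => ComplexField.Normc.normc (iter m (Qmap x) z - th)) @ \oo --> (0 : R)) /\
     exists C r : R, 0 < C /\ 0 < r < 1 /\
       forall m : nat, ComplexField.Normc.normc (iter m (Qmap x) z - th) <= C * r ^+ m).
Proof.
have s0 := sg_gt0.
split; [split|split].
- by exists th; split; [exact: s0 | rewrite Q_th].
- move=> z y0 hQ; apply: rho_eq0 => //.
  have D00 : 0 <= rho z th by apply: rho_ge0; rewrite mulr_gt0.
  have [eta [e0 e1 H]] := contract _ D00.
  have [_ h] := H z y0 (lexx _).
  rewrite -hQ in h.
  apply/eqP; rewrite eq_le D00 andbT.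
  have : eta * rho z th <= 0 by lra.
  by rewrite pmulr_rle0.
- exact: Q_th.
move=> z y0.
have [eta [e0 e1 H]] := iter_bound _ y0.
set D0 := rho z th.
have D00 : 0 <= D0 by apply: rho_ge0; rewrite mulr_gt0.
pose B := D0 * (2 + D0) * sg ^+ 2.
have D2 : 0 <= 2 + D0 by lra.
have B0 : 0 <= B by apply: mulr_ge0; [apply: mulr_ge0 | apply: sqr_ge0].
pose C := Num.sqrt B + 1.
pose r := Num.sqrt (1 - eta).
have C0 : 0 < C by rewrite /C ltr_pwDr ?sqrtr_ge0.
have r0 : 0 < r by rewrite /r sqrtr_gt0; lra.
have r2 : r ^+ 2 = 1 - eta by rewrite /r sqr_sqrtr //; lra.
have r1 : r < 1 by have := ltW r0; nra.
have bound : forall m, ComplexField.Normc.normc (iter m (Qmap x) z - th) <= C * r ^+ m.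
  move=> m; have [h1 h2] := H m.
  have hr : rho (iter m (Qmap x) z) th <= D0.
    apply: le_trans h2 _; rewrite ler_piMl //; last by rewrite exprn_ile1 //; lra.
  have [_ hb _] := region _ _ D00 h1 hr.
  rewrite normc_sq.
  have sqb : sq (iter m (Qmap x) z - th) <= (1 - eta) ^+ m * B.
    move: h2; rewrite [rho (iter _ _ _) th]/rho ler_pdivrMr ?mulr_gt0 // => h2.
    have a0 : 0 <= (1 - eta) ^+ m by apply: exprn_ge0; lra.
    apply: le_trans h2 _; rewrite /B -/sg -[X in X <= _]mulrA ler_wpM2l //.
    rewrite -[X in _ <= X]mulrA ler_wpM2l // expr2 mulrA ler_wpM2r //; exact: ltW.
  have r0' := ltW r0; have C0' := ltW C0.
  have Cr : 0 <= C * r ^+ m by rewrite mulr_ge0 // exprn_ge0.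
  rewrite -ler_sqr ?nnegrE ?sqrtr_ge0 //.
  rewrite sqr_sqrtr ?sq_ge0 // (le_trans sqb) //.
  rewrite exprMn -exprM mulnC exprM r2 mulrC.
  have a0 : 0 <= (1 - eta) ^+ m by apply: exprn_ge0; lra.
  rewrite ler_wpM2r //.
  rewrite /C sqrrD sqr_sqrtr // expr1n mulr1.
  have := sqrtr_ge0 B; lra.
split; last by exists C, r; split => //; split; [apply/andP; split | exact: bound].
apply: (@squeeze_cvgr _ _ _ _ (fun=> 0) (fun m => C * r ^+ m)).
- apply: nearW => m; rewrite /= bound andbT normc_sq sqrtr_ge0 //.
- exact: cvg_cst.
- rewrite -(mulr0 C); apply: cvgM; first exact: cvg_cst.
  by apply: cvg_expr; rewrite ger0_norm ?ltW.
Qed.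
End S.

Theorem mainTheorem1 (R : realType) (n : nat) (x : 'I_n -> R) (th : R[i]) :
  (3 <= n)%N -> injective x -> is_mle x th ->
  (* (i) unique solution of z = Q z in H, equal to th *)
  ((exists z, inH z /\ z = Qmap x z) /\
   (forall z, inH z -> z = Qmap x z -> z = th)) /\
  (* (ii) th is a fixed point of Q *)
  Qmap x th = th /\
  (* (iii) convergence of the iterates, exponentially fast *)
  (forall z, inH z ->
     ((fun m => ComplexField.Normc.normc (iter m (Qmap x) z - th)) @ \oo --> (0 : R)) /\
     exists C r : R, 0 < C /\ 0 < r < 1 /\
       forall m : nat, ComplexField.Normc.normc (iter m (Qmap x) z - th) <= C * r ^+ m).
Proof. by move=> n3 xinj Hmle; apply: main_sec. Qed.
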